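(* Let $n\ge 1$ and let $A_1,\dots,A_n$ be real orthogonal $n\times n$ matrices such that $A_1=\mathbb{1}_n$ (the identity) and $A_iA_j+A_jA_i=-2\delta_{i,j}\mathbb{1}_n$ for all $i,j\in\{2,\dots,n\}$. For $x,y\in\mathcal{S}^{n-1}$ define $\alpha_i(x,y)=(A_ix\,|\,y)$ and $$M(x,y)=\sum_{i=1}^n\alpha_i(x,y)A_i.$$ Then $M$ is a continuous map from $\mathcal{S}^{n-1}\times\mathcal{S}^{n-1}$ to the orthogonal group $O(n)$, and $M(x,y)\,x=y$ for all $x,y\in\mathcal{S}^{n-1}$.
   Context: $\mathcal{S}^{n-1}$ is the unit sphere of $\mathbb{R}^n$, $(\cdot|\cdot)$ is the standard Euclidean inner product on $\mathbb{R}^n$, and $\delta_{i,j}$ is the Kronecker delta. (Such families exist for $n=2,4,8$.) *)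

(* Defs.v *)
From HB Require Import structures.
From mathcomp Require Import all_boot all_order all_algebra.
From mathcomp Require Import all_classical all_reals all_analysis.
Set Implicit Arguments. Unset Strict Implicit. Unset Printing Implicit Defensive.
Import Order.TTheory GRing.Theory Num.Theory.
Local Open Scope ring_scope.

Definition inner (R : realType) (n : nat) (u v : 'cV[R]_n) : R :=
  \sum_(k < n) u k 0 * v k 0.

Definition sphere (R : realType) (n : nat) : set 'cV[R]_n :=
  [set x | inner x x = 1].

Definition orthogonal_mx (R : realType) (n : nat) (A : 'M[R]_n) : Prop :=
  A^T *m A = 1%:M.

Definition alpha (R : realType) (n : nat) (A : 'I_n -> 'M[R]_n) (i : 'I_n)
  (x y : 'cV[R]_n) : R := inner (A i *m x) y.

Definition Mmap (R : realType) (n : nat) (A : 'I_n -> 'M[R]_n)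
  (p : 'cV[R]_n * 'cV[R]_n) : 'M[R]_n :=
  \sum_(i < n) alpha A i p.1 p.2 *: A i.

(* Main.v *)
Require Import Defs.
From HB Require Import structures.
From mathcomp Require Import all_boot all_order all_algebra.
From mathcomp Require Import all_classical all_reals all_analysis.
Import Order.TTheory GRing.Theory Num.Theory.
Import numFieldNormedType.Exports.
Local Open Scope classical_set_scope.
Local Open Scope ring_scope.

Section C.
Variable R : realType.
Variable n : nat.
Let T := ('cV[R]_n * 'cV[R]_n)%type.

Lemma cont_sum {V : normedModType R} (I : eqType) (s : seq I) (f : I -> T -> V) x :
  (forall i, {for x, continuous (f i)}) ->
  {for x, continuous (fun p => \sum_(i <- s) f i p)}.
Proof.
move=> hf; elim: s => [|a s IH].
  have -> : (fun p => \sum_(i <- [::]) f i p) = fun=> 0.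
    by apply: funext => p; rewrite big_nil.
  exact: cst_continuous.
have -> : (fun p => \sum_(i <- a :: s) f i p) = f a + (fun p => \sum_(i <- s) f i p).
  by apply: funext => p; rewrite big_cons.
exact: (continuousD (hf a) IH).
Qed.

Lemma cont_fst l x : {for x, continuous (fun p : T => p.1 l 0)}.
Proof.
apply: (continuous_comp (f := fst) (g := fun M : 'cV[R]_n => M l 0)).
  exact: cvg_fst.
exact: coord_continuous.
Qed.

Lemma cont_snd l x : {for x, continuous (fun p : T => p.2 l 0)}.
Proof.
apply: (continuous_comp (f := snd) (g := fun M : 'cV[R]_n => M l 0)).
  exact: cvg_snd.
exact: coord_continuous.
Qed.

Lemma cont_M (A : 'I_n -> 'M[R]_n) : continuous (Mmap A).
Proof.
move=> x; rewrite /Mmap.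
apply: cont_sum => i; apply: continuousZr_tmp.
rewrite /alpha /inner.
apply: cont_sum => k; apply: continuousM; last exact: cont_snd.
have -> : (fun p : T => (A i *m p.1) k 0) = fun p : T => \sum_(l < n) A i k l * p.1 l 0.
  by apply: funext => p; rewrite mxE.
apply: cont_sum => l; apply: continuousM; first exact: cst_continuous.
exact: cont_fst.
Qed.
End C.

Section Alg.
Variable R : realType.
Variable n : nat.
Variable A : 'I_n -> 'M[R]_n.
Hypothesis hO : forall i : 'I_n, orthogonal_mx (A i).
Hypothesis h1 : forall i : 'I_n, val i = 0%N -> A i = 1%:M.
Hypothesis hC : forall i j : 'I_n, (0 < val i)%N -> (0 < val j)%N ->
        A i *m A j + A j *m A i = - ((2 * (i == j)%:R) *: 1%:M).

Lemma two_inj (X Y : 'M[R]_n) : 2 *: X = 2 *: Y -> X = Y.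
Proof.
move=> h; have := congr1 (fun Z => 2^-1 *: Z) h.
by rewrite !scalerA mulVf ?pnatr_eq0 // !scale1r.
Qed.

Lemma skew i : (0 < val i)%N -> (A i)^T = - A i.
Proof.
move=> ip; have := hC i i ip ip; rewrite eqxx mulr1 -mulr2n -scaler_nat -scalerN.
move=> /two_inj hAA.
have : (A i)^T *m (A i *m A i) = - (A i)^T.
  by rewrite hAA mulmxN mulmx1.
have hi : (A i)^T *m A i = 1%:M := hO i.
move=> h; rewrite mulmxA hi mul1mx in h; by rewrite [in RHS]h opprK.
Qed.

Lemma key i j : (A i)^T *m A j + (A j)^T *m A i = (2 * (i == j)%:R) *: 1%:M.
Proof.
have [i0|ip] := posnP (val i); have [j0|jp] := posnP (val j).
- have ij : i = j by apply: val_inj; rewrite i0 j0.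
  have hj : (A j)^T *m A j = 1%:M := hO j.
  by rewrite ij eqxx hj mulr1 -mulr2n scaler_nat.
- rewrite h1 // trmx1 mul1mx mulmx1 skew // subrr.
  have -> : (i == j) = false by apply/negP => /eqP ij; move: jp; rewrite -ij i0.
  by rewrite mulr0 scale0r.
- rewrite (h1 j j0) trmx1 mul1mx mulmx1 skew // addrC subrr.
  have -> : (i == j) = false by apply/negP => /eqP ij; move: ip; rewrite ij j0.
  by rewrite mulr0 scale0r.
- by rewrite !skew // !mulNmx -opprD hC // opprK.
Qed.

Lemma innerE (u v : 'cV[R]_n) : inner u v = (u^T *m v) 0 0.
Proof. by rewrite /inner mxE; apply: eq_bigr => k _; rewrite mxE. Qed.

Definition q (x : 'cV[R]_n) (B : 'M[R]_n) : R := (x^T *m (B *m x)) 0 0.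

Lemma q_tr x B : q x B^T = q x B.
Proof.
rewrite /q; have -> : x^T *m (B^T *m x) = (x^T *m (B *m x))^T.
  by rewrite trmx_mul trmxK trmx_mul mulmxA.
by rewrite mxE.
Qed.

Lemma qD x B C : q x (B + C) = q x B + q x C.
Proof. by rewrite /q mulmxDl mulmxDr mxE. Qed.

Lemma qZ x a B : q x (a *: B) = a * q x B.
Proof. by rewrite /q -scalemxAl -scalemxAr mxE. Qed.

Lemma q1 x : q x 1%:M = inner x x.
Proof. by rewrite /q mul1mx innerE. Qed.

Lemma Mx_orth x : inner x x = 1 -> forall i j : 'I_n,
  inner (A i *m x) (A j *m x) = (i == j)%:R.
Proof.
move=> hx i j.
have e : inner (A i *m x) (A j *m x) = q x ((A i)^T *m A j).
  by rewrite innerE /q trmx_mul !mulmxA.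
have := congr1 (q x) (key i j).
rewrite qD qZ q1 hx mulr1 -e -[X in _ + X]q_tr trmx_mul trmxK -e.
move=> h; apply: (mulfI (x := 2)); first by rewrite pnatr_eq0.
by rewrite -h mulr2n mulrDl !mul1r.
Qed.

Definition P (x : 'cV[R]_n) : 'M[R]_n := \matrix_(k, i) (A i *m x) k 0.

Lemma PtP x : inner x x = 1 -> (P x)^T *m P x = 1%:M.
Proof.
move=> hx; apply/matrixP => i j; rewrite !mxE -(Mx_orth _ hx) /inner.
by apply: eq_bigr => k _; rewrite !mxE.
Qed.

Lemma PPt x : inner x x = 1 -> P x *m (P x)^T = 1%:M.
Proof. by move=> hx; apply: mulmx1C; apply: PtP. Qed.

Lemma Pty x y : (P x)^T *m y = \col_i alpha A i x y.
Proof.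
apply/matrixP => i j; rewrite !mxE (ord1 j) /alpha /inner.
by apply: eq_bigr => k _; rewrite !mxE.
Qed.

Lemma Mx x y : Mmap A (x, y) *m x = P x *m ((P x)^T *m y).
Proof.
rewrite Pty /Mmap mulmx_suml; apply/matrixP => k j.
rewrite (ord1 j) summxE !mxE; apply: eq_bigr => i _.
by rewrite -scalemxAl !mxE mulrC.
Qed.

Lemma Mmap_x x y : inner x x = 1 -> Mmap A (x, y) *m x = y.
Proof. by move=> hx; rewrite Mx mulmxA PPt // mul1mx. Qed.

Lemma sum_alpha x y : inner x x = 1 -> inner y y = 1 ->
  \sum_i alpha A i x y * alpha A i x y = 1.
Proof.
move=> hx hy.
have : inner ((P x)^T *m y) ((P x)^T *m y) = 1.
  by rewrite innerE trmx_mul trmxK mulmxA -(mulmxA y^T) PPt // mulmx1 -innerE.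
rewrite Pty /inner => <-; apply: eq_bigr => i _; by rewrite !mxE.
Qed.

End Alg.

Lemma sym_sum (R : realType) n (c : 'I_n -> 'I_n -> R) (B : 'I_n -> 'I_n -> 'M[R]_n) :
  (forall i j, c i j = c j i) ->
  (forall i j, B i j + B j i = (2 * (i == j)%:R) *: 1%:M) ->
  \sum_i \sum_j c i j *: B i j = (\sum_i c i i) *: 1%:M.
Proof.
move=> hc hB.
set S := \sum_i _.
have e : S = \sum_i \sum_j c i j *: B j i.
  rewrite /S exchange_big /=; apply: eq_bigr => i _; apply: eq_bigr => j _.
  by rewrite hc.
apply: two_inj.
rewrite scalerA [in LHS]scaler_nat mulr2n [X in X + _]e /S -big_split /=.
rewrite mulr_sumr scaler_suml; apply: eq_bigr => i _.
rewrite -big_split /= (bigD1 i) //= big1.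
  by rewrite addr0 -scalerDr addrC hB eqxx mulr1 scalerA mulrC.
move=> j ji; rewrite -scalerDr addrC hB.
have -> : (i == j) = false by apply/negP => /eqP ij; move: ji; rewrite ij eqxx.
by rewrite mulr0 scale0r scaler0.
Qed.

Lemma Mmap_orth (R : realType) (n : nat) (A : 'I_n -> 'M[R]_n)
  (hO : forall i : 'I_n, orthogonal_mx (A i))
  (h1 : forall i : 'I_n, val i = 0%N -> A i = 1%:M)
  (hC : forall i j : 'I_n, (0 < val i)%N -> (0 < val j)%N ->
        A i *m A j + A j *m A i = - ((2 * (i == j)%:R) *: 1%:M)) x y :
  inner x x = 1 -> inner y y = 1 -> orthogonal_mx (Mmap A (x, y)).
Proof.
move=> hx hy; rewrite /orthogonal_mx /Mmap /=.
have -> : (\sum_i alpha A i x y *: A i)^T *m (\sum_i alpha A i x y *: A i)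
   = \sum_i \sum_j (alpha A i x y * alpha A j x y) *: ((A i)^T *m A j).
  have -> : (\sum_i alpha A i x y *: A i)^T = \sum_i alpha A i x y *: (A i)^T.
    apply/matrixP => k l; rewrite !mxE !summxE; apply: eq_bigr => i _.
    by rewrite !mxE.
  rewrite mulmx_suml; apply: eq_bigr => i _.
  rewrite mulmx_sumr; apply: eq_bigr => j _.
  by rewrite -scalemxAl -scalemxAr scalerA.
rewrite (@sym_sum _ _ _ (fun i j => (A i)^T *m A j)).
- by rewrite (@sum_alpha _ _ _ hO h1 hC _ _ hx hy) scale1r.
- by move=> i j; rewrite mulrC.
- by move=> i j; apply: (@key _ _ _ hO h1 hC).
Qed.

Theorem lemma2 (R : realType) (n : nat) (hn : (0 < n)%N)
  (A : 'I_n -> 'M[R]_n)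
  (hO : forall i : 'I_n, orthogonal_mx (A i))
  (h1 : forall i : 'I_n, val i = 0%N -> A i = 1%:M)
  (hC : forall i j : 'I_n, (0 < val i)%N -> (0 < val j)%N ->
        A i *m A j + A j *m A i = - ((2 * (i == j)%:R) *: 1%:M)) :
  {within @sphere R n `*` @sphere R n, continuous (Mmap A)} /\
  (forall x y : 'cV[R]_n, @sphere R n x -> @sphere R n y ->
     orthogonal_mx (Mmap A (x, y)) /\ Mmap A (x, y) *m x = y).
Proof.
split.
  apply: continuous_subspaceT; exact: cont_M.
move=> x y hx hy; split; first exact: Mmap_orth.
exact: (@Mmap_x _ _ _ hO h1 hC _ y hx).
Qed.
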